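(* Let $|q|<1$ and let $(\alpha_n,\beta_n)$ be a Bailey pair with respect to $a$, with $|qa|<1$, no denominator vanishing, and all series converging absolutely. Then $$\sum_{n=1}^{\infty} (q^2;q^2)_{n-1}(-q a)^{n} \beta_n - \sum_{n=1}^{\infty}\frac{(q^2;q^2)_{n-1}(-q a)^{n}}{(q^2 a^2 ;q^2)_n}\alpha_n=f_3(a,q),$$ where $f_3(a,q)$ is given by each of the following (equal) expressions: $$f_3(a,q)=-\sum_{n=1}^{\infty} \frac{(q\sqrt{a},-q\sqrt{a},a;q)_{n}(-q;q)_{n-1}q^{n(n+1)/2}a^{n}}{(\sqrt{a},-\sqrt{a};q)_{n}(q^2 a^2;q^2)_{n}(1-q^n)} =\sum_{n=1}^{\infty} \frac{(-q;q)_{n-1}(-q a)^{n}}{(q a;q)_{n}(1-q^n)} =-\sum_{n=1}^{\infty}\frac{a q^n}{1-a^2q^{2n}}.$$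
   Context: Notation: $(x;q)_n=(1-x)(1-xq)\cdots(1-xq^{n-1})$, $(x;q)_0=1$, $(x_1,\dots,x_m;q)_n=(x_1;q)_n\cdots(x_m;q)_n$. A Bailey pair with respect to $a$ (base $q$) is a pair of sequences $(\alpha_n,\beta_n)_{n\ge0}$ with $\alpha_0=\beta_0=1$ and, for $n>0$, $\beta_n=\sum_{j=0}^{n}\frac{\alpha_j}{(q;q)_{n-j}(aq;q)_{n+j}}$. *)

(* Defs.v *)
From Stdlib Require Import Reals.
Open Scope R_scope.

Definition Cx : Type := (R * R)%type.

Definition RtoC (x : R) : Cx := (x, 0).
Definition Czero : Cx := (0, 0).
Definition Cone : Cx := (1, 0).
Definition Cadd (z w : Cx) : Cx := (fst z + fst w, snd z + snd w).
Definition Copp (z : Cx) : Cx := (- fst z, - snd z).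
Definition Csub (z w : Cx) : Cx := Cadd z (Copp w).
Definition Cmul (z w : Cx) : Cx :=
  (fst z * fst w - snd z * snd w, fst z * snd w + snd z * fst w).
Definition Cinv (z : Cx) : Cx :=
  (fst z / (fst z ^ 2 + snd z ^ 2), - snd z / (fst z ^ 2 + snd z ^ 2)).
Definition Cdiv (z w : Cx) : Cx := Cmul z (Cinv w).
Definition Cnorm (z : Cx) : R := sqrt (fst z ^ 2 + snd z ^ 2).

Fixpoint Cpow (z : Cx) (n : nat) : Cx :=
  match n with O => Cone | S k => Cmul z (Cpow z k) end.

Declare Scope C_scope.
Delimit Scope C_scope with C.
Infix "+" := Cadd : C_scope.
Infix "-" := Csub : C_scope.
Notation "- z" := (Copp z) : C_scope.
Infix "*" := Cmul : C_scope.
Infix "/" := Cdiv : C_scope.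
Infix "^" := Cpow : C_scope.

Fixpoint Csum (f : nat -> Cx) (n : nat) : Cx :=
  match n with O => Czero | S k => Cadd (Csum f k) (f k) end.

Fixpoint qpoch (x q : Cx) (n : nat) : Cx :=
  match n with O => Cone | S k => Cmul (qpoch x q k) (Csub Cone (Cmul x (Cpow q k))) end.

Definition Cseries_cv (f : nat -> Cx) (l : Cx) : Prop :=
  forall eps : R, eps > 0 -> exists N : nat, forall n : nat, (n >= N)%nat ->
    Cnorm (Csub (Csum f n) l) < eps.

Definition Cabs_summable (f : nat -> Cx) : Prop :=
  exists L : R, Un_cv (fun n => sum_f_R0 (fun k => Cnorm (f k)) n) L.

Definition bailey_pair (a q : Cx) (alpha beta : nat -> Cx) : Prop :=
  alpha O = Cone /\ beta O = Cone /\
  forall n : nat, (n > 0)%nat ->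
    beta n = Csum (fun j => Cdiv (alpha j)
                      (Cmul (qpoch q q (n - j)) (qpoch (Cmul a q) q (n + j)))) (S n).

(* Main.v *)
Require Import Defs.
From Stdlib Require Import Reals.
From Stdlib Require Import Lra Lia Field Arith Classical.
From Coquelicot Require Complex.
Open Scope R_scope.
Local Open Scope C_scope.

Open Scope R_scope.
Local Open Scope C_scope.

Lemma Cx_field : field_theory Czero Cone Cadd Cmul Csub Copp Cdiv Cinv (@eq Cx).
Proof. exact Complex.C_field_theory. Qed.
Add Field Cxfield : Cx_field.

Lemma Cnorm_mul (x y : Cx) : Cnorm (x * y) = (Cnorm x * Cnorm y)%R.
Proof. exact (Complex.Cmod_mult x y). Qed.
Lemma Cnorm_tri (x y : Cx) : Rle (Cnorm (x + y)) (Cnorm x + Cnorm y)%R.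
Proof. exact (Complex.Cmod_triangle x y). Qed.
Lemma Cnorm_ge0 (x : Cx) : Rle 0 (Cnorm x).
Proof. exact (Complex.Cmod_ge_0 x). Qed.
Lemma Cnorm_opp (x : Cx) : Cnorm (- x) = Cnorm x.
Proof. exact (Complex.Cmod_opp x). Qed.
Lemma Cnorm_zero : Cnorm Czero = 0%R.
Proof. exact Complex.Cmod_0. Qed.
Lemma Cnorm_one : Cnorm Cone = 1%R.
Proof. exact Complex.Cmod_1. Qed.
Lemma Cnorm_eq0 (x : Cx) : Cnorm x = 0%R -> x = Czero.
Proof. exact (Complex.Cmod_eq_0 x). Qed.
Lemma Cnorm_pos (x : Cx) : x <> Czero -> Rlt 0 (Cnorm x).
Proof. intro H. apply (proj1 (Complex.Cmod_gt_0 x)). exact H. Qed.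
Lemma Cnorm_div (x y : Cx) : y <> Czero -> Cnorm (x / y) = (Cnorm x / Cnorm y)%R.
Proof. intro H. exact (Complex.Cmod_div x y H). Qed.
Lemma Cnorm_inv (y : Cx) : y <> Czero -> Cnorm (Cinv y) = (/ Cnorm y)%R.
Proof. intro H. exact (Complex.Cmod_inv y H). Qed.
Lemma Cnorm_pow (x : Cx) n : Cnorm (x ^ n) = (Cnorm x ^ n)%R.
Proof. induction n; simpl. apply Cnorm_one. rewrite Cnorm_mul, IHn. reflexivity. Qed.
Lemma Cnorm_sub (x y : Cx) : Rle (Cnorm (x - y)) (Cnorm x + Cnorm y)%R.
Proof. unfold Csub. rewrite <- (Cnorm_opp y). apply Cnorm_tri. Qed.
Lemma Cnorm_sub_sym (x y : Cx) : Cnorm (x - y) = Cnorm (y - x).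
Proof. replace (x - y) with (- (y - x)) by ring. apply Cnorm_opp. Qed.
Lemma Cnorm_rev (x y : Cx) : Rle (Cnorm x - Cnorm y)%R (Cnorm (x - y)).
Proof. pose proof (Cnorm_tri (x - y) y). replace (x - y + y) with x in H by ring. lra. Qed.
Lemma Cnorm_1sub (w : Cx) : Rle (1 - Cnorm w)%R (Cnorm (Cone - w)).
Proof. rewrite <- Cnorm_one. apply Cnorm_rev. Qed.
Lemma Cnorm_1sub_le (w : Cx) : Rle (Cnorm (Cone - w)) (1 + Cnorm w)%R.
Proof. rewrite <- Cnorm_one. apply Cnorm_sub. Qed.

Lemma Cpow_add (x : Cx) m n : x ^ (m + n) = x ^ m * x ^ n.
Proof. induction m; simpl. ring. rewrite IHm. ring. Qed.
Lemma Cpow_mulb (x y : Cx) n : (x * y) ^ n = x ^ n * y ^ n.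
Proof. induction n; simpl. ring. rewrite IHn. ring. Qed.
Lemma Cpow_mul (x : Cx) m n : x ^ (m * n) = (x ^ m) ^ n.
Proof. induction n. rewrite Nat.mul_0_r. reflexivity.
  rewrite Nat.mul_succ_r, Cpow_add, IHn. simpl. ring. Qed.
Lemma Cpow_nz (x : Cx) n : x <> Czero -> x ^ n <> Czero.
Proof. intros H E. apply Cnorm_pos in H. assert (Cnorm (x ^ n) = 0%R) by (rewrite E; apply Cnorm_zero).
  rewrite Cnorm_pow in H0. apply pow_nonzero in H0; auto. lra. Qed.
Lemma Cmul_nz (x y : Cx) : x <> Czero -> y <> Czero -> x * y <> Czero.
Proof. intros H1 H2 E. apply Cnorm_pos in H1. apply Cnorm_pos in H2.
  assert (Cnorm (x * y) = 0%R) by (rewrite E; apply Cnorm_zero). rewrite Cnorm_mul in H.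
  nra. Qed.
Lemma Cone_nz : Cone <> Czero.
Proof. intro E. pose proof Cnorm_one. rewrite E, Cnorm_zero in H. lra. Qed.

Lemma qpoch_add (x p : Cx) m n : qpoch x p (m + n) = qpoch x p m * qpoch (x * p ^ m) p n.
Proof. induction n. rewrite Nat.add_0_r. simpl. ring.
  rewrite Nat.add_succ_r. simpl. rewrite IHn, Cpow_add. ring. Qed.
Lemma qpoch_nz_l (x p : Cx) m n : qpoch x p (m + n) <> Czero -> qpoch x p m <> Czero.
Proof. rewrite qpoch_add. intros H E. apply H. rewrite E. ring. Qed.
Lemma qpoch_nz_r (x p : Cx) m n : qpoch x p (m + n) <> Czero -> qpoch (x * p ^ m) p n <> Czero.
Proof. rewrite qpoch_add. intros H E. apply H. rewrite E. ring. Qed.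

Lemma Csum_ext f g n : (forall k, (k < n)%nat -> f k = g k) -> Csum f n = Csum g n.
Proof. induction n; intros H; simpl. reflexivity. rewrite IHn, H; auto. Qed.
Lemma Csum_add f g n : Csum (fun k => f k + g k) n = Csum f n + Csum g n.
Proof. induction n; simpl. unfold Czero, Cadd; simpl; f_equal; ring. rewrite IHn. ring. Qed.
Lemma Csum_scal c f n : Csum (fun k => c * f k) n = c * Csum f n.
Proof. induction n; simpl. unfold Czero, Cmul; simpl; f_equal; ring. rewrite IHn. ring. Qed.
Lemma Csum_sub f g n : Csum (fun k => f k - g k) n = Csum f n - Csum g n.
Proof. induction n; simpl. unfold Czero, Csub, Cadd, Copp; simpl; f_equal; ring. rewrite IHn. ring. Qed.
Lemma Csum_shift f n : Csum f (S n) = f O + Csum (fun k => f (S k)) n.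
Proof. induction n. simpl. ring. change (Csum f (S (S n))) with (Csum f (S n) + f (S n)).
  rewrite IHn. simpl. ring. Qed.
Lemma Csum_zero n : Csum (fun _ => Czero) n = Czero.
Proof. induction n; simpl. reflexivity. rewrite IHn. ring. Qed.

Fixpoint Rsum (f : nat -> R) (n : nat) : R :=
  match n with O => 0 | S k => Rsum f k + f k end.
Lemma Rsum_f_R0 f n : sum_f_R0 f n = Rsum f (S n).
Proof. induction n; simpl. lra. rewrite IHn. simpl. reflexivity. Qed.
Lemma Csum_norm f n : Rle (Cnorm (Csum f n)) (Rsum (fun k => Cnorm (f k)) n).
Proof. induction n; simpl. rewrite Cnorm_zero. lra. eapply Rle_trans. apply Cnorm_tri. lra. Qed.
Lemma Rsum_le f g n : (forall k, (k < n)%nat -> Rle (f k) (g k)) -> Rle (Rsum f n) (Rsum g n).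
Proof. induction n; intros H; simpl. lra. pose proof (H n ltac:(lia)). pose proof (IHn ltac:(intros; apply H; lia)). lra. Qed.
Lemma Rsum_nonneg f n : (forall k, Rle 0 (f k)) -> Rle 0 (Rsum f n).
Proof. induction n; intros H; simpl. lra. pose proof (H n). pose proof (IHn H). lra. Qed.
Lemma Rsum_mono f m n : (forall k, Rle 0 (f k)) -> (m <= n)%nat -> Rle (Rsum f m) (Rsum f n).
Proof. intros H Hmn. induction Hmn. lra. simpl. pose proof (H m0). lra. Qed.
Lemma Rsum_scal c f n : Rsum (fun k => c * f k)%R n = (c * Rsum f n)%R.
Proof. induction n; simpl. ring. rewrite IHn. ring. Qed.
Lemma Rsum_geom r n : r <> 1%R -> Rsum (fun k => r ^ k)%R n = ((1 - r ^ n) / (1 - r))%R.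
Proof. intros H. induction n; simpl. field. lra. rewrite IHn. field. lra. Qed.
Lemma Rsum_geom_le r n : Rle 0 r -> Rlt r 1 -> Rle (Rsum (fun k => r ^ k)%R n) (/ (1 - r))%R.
Proof. intros H0 H1. rewrite Rsum_geom by lra. unfold Rdiv.
  apply Rle_trans with (1 * / (1 - r))%R; [|lra]. apply Rmult_le_compat_r.
  apply Rlt_le, Rinv_0_lt_compat; lra.
  pose proof (pow_le r n H0). lra. Qed.

Open Scope R_scope.
Local Open Scope C_scope.

Definition Ccv (u : nat -> Cx) (l : Cx) : Prop :=
  forall eps : R, eps > 0 -> exists N : nat, forall n : nat, (n >= N)%nat -> Cnorm (u n - l) < eps.

Lemma Ccv_unique u l1 l2 : Ccv u l1 -> Ccv u l2 -> l1 = l2.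
Proof.
  intros H1 H2. destruct (Req_dec (Cnorm (l1 - l2)) 0) as [E|E].
  - apply Cnorm_eq0 in E. replace l1 with (l1 - l2 + l2) by ring. rewrite E. ring.
  - pose proof (Cnorm_ge0 (l1 - l2)).
    destruct (H1 (Cnorm (l1 - l2)%C / 2)%R ltac:(lra)) as [N1 HN1].
    destruct (H2 (Cnorm (l1 - l2)%C / 2)%R ltac:(lra)) as [N2 HN2].
    specialize (HN1 (N1 + N2)%nat ltac:(lia)). specialize (HN2 (N1 + N2)%nat ltac:(lia)).
    pose proof (Cnorm_tri (l1 - u (N1+N2)%nat) (u (N1+N2)%nat - l2)).
    replace (l1 - u (N1+N2)%nat + (u (N1+N2)%nat - l2)) with (l1 - l2) in H0 by ring.
    exfalso. rewrite (Cnorm_sub_sym l1 (u _)) in H0. lra.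
Qed.

Lemma Ccv_ext u v l : (forall n, u n = v n) -> Ccv u l -> Ccv v l.
Proof. intros E H eps He. destruct (H eps He) as [N HN]. exists N. intros. rewrite <- E. auto. Qed.

Lemma Ccv_const c : Ccv (fun _ => c) c.
Proof. intros eps He. exists O. intros. replace (c - c) with Czero by ring. rewrite Cnorm_zero. lra. Qed.

Lemma Ccv_add u v l m : Ccv u l -> Ccv v m -> Ccv (fun n => u n + v n) (l + m).
Proof.
  intros H1 H2 eps He. destruct (H1 (eps/2)%R ltac:(lra)) as [N1 HN1].
  destruct (H2 (eps/2)%R ltac:(lra)) as [N2 HN2]. exists (N1 + N2)%nat. intros n Hn.
  replace (u n + v n - (l + m)) with ((u n - l) + (v n - m)) by ring.
  eapply Rle_lt_trans. apply Cnorm_tri. specialize (HN1 n ltac:(lia)). specialize (HN2 n ltac:(lia)). lra.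
Qed.

Lemma Ccv_scal c u l : Ccv u l -> Ccv (fun n => c * u n) (c * l).
Proof.
  intros H eps He. pose proof (Cnorm_ge0 c).
  destruct (H (eps / (Cnorm c + 1))%R) as [N HN].
  { apply Rdiv_lt_0_compat; lra. }
  exists N. intros n Hn. replace (c * u n - c * l) with (c * (u n - l)) by ring.
  rewrite Cnorm_mul. specialize (HN n Hn). pose proof (Cnorm_ge0 (u n - l)).
  apply Rle_lt_trans with ((Cnorm c + 1) * Cnorm (u n - l)%C)%R. nra.
  apply Rmult_lt_compat_l with (r := (Cnorm c + 1)%R) in HN; [|lra].
  replace ((Cnorm c + 1) * (eps / (Cnorm c + 1)))%R with eps in HN by (field; lra). lra.
Qed.

Lemma Ccv_opp u l : Ccv u l -> Ccv (fun n => - u n) (- l).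
Proof. intros H. pose proof (Ccv_scal (- Cone) _ _ H) as H'.
  replace (- Cone * l) with (- l) in H' by ring. eapply Ccv_ext; [|exact H']. intros; simpl; ring. Qed.
Lemma Ccv_sub u v l m : Ccv u l -> Ccv v m -> Ccv (fun n => u n - v n) (l - m).
Proof. intros H1 H2. apply Ccv_add; auto. apply Ccv_opp; auto. Qed.

Lemma Ccv_shift u l : Ccv u l -> Ccv (fun n => u (S n)) l.
Proof. intros H eps He. destruct (H eps He) as [N HN]. exists N. intros. apply HN. lia. Qed.
Lemma Ccv_unshift u l : Ccv (fun n => u (S n)) l -> Ccv u l.
Proof. intros H eps He. destruct (H eps He) as [N HN]. exists (S N). intros n Hn.
  destruct n. lia. apply HN. lia. Qed.

Lemma Ccv_bound u l B : Ccv u l -> (forall n, Cnorm (u n) <= B) -> Cnorm l <= B.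
Proof.
  intros H Hb. apply Rnot_lt_le. intro Hlt.
  destruct (H (Cnorm l - B)%R ltac:(lra)) as [N HN]. specialize (HN N ltac:(lia)).
  pose proof (Cnorm_rev l (u N)). rewrite Cnorm_sub_sym in H0. specialize (Hb N). lra.
Qed.

Lemma Ccv_squeeze u r : (forall n, Cnorm (u n) <= r n) -> Un_cv r 0 -> Ccv u Czero.
Proof.
  intros Hb Hr eps He. destruct (Hr eps He) as [N HN]. exists N. intros n Hn.
  specialize (HN n Hn). unfold R_dist in HN. rewrite Rminus_0_r in HN.
  replace (u n - Czero) with (u n) by (unfold Csub, Cadd, Copp, Czero; destruct (u n); simpl; f_equal; ring).
  specialize (Hb n). apply Rle_lt_trans with (r n); auto. pose proof (Rle_abs (r n)). lra.
Qed.

Lemma Ccv_zero_iff u l : Ccv (fun n => u n - l) Czero -> Ccv u l.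
Proof. intros H eps He. destruct (H eps He) as [N HN]. exists N. intros n Hn.
  specialize (HN n Hn). replace (u n - l - Czero) with (u n - l) in HN by ring. exact HN. Qed.

Lemma Un_cv_geom r : 0 <= r -> r < 1 -> Un_cv (fun n => (r ^ n)%R) 0.
Proof.
  intros H0 H1 eps He. destruct (pow_lt_1_zero r ltac:(rewrite Rabs_right; lra) eps He) as [N HN].
  exists N. intros n Hn. unfold R_dist. rewrite Rminus_0_r. auto.
Qed.

Lemma Un_cv_scal c r : Un_cv r 0 -> Un_cv (fun n => (c * r n)%R) 0.
Proof.
  intros H eps He. destruct (H (eps / (Rabs c + 1))%R) as [N HN].
  { apply Rdiv_lt_0_compat; [lra|]. pose proof (Rabs_pos c); lra. }
  exists N. intros n Hn. specialize (HN n Hn). unfold R_dist in *. rewrite Rminus_0_r in *.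
  rewrite Rabs_mult. pose proof (Rabs_pos c). pose proof (Rabs_pos (r n)).
  apply Rle_lt_trans with ((Rabs c + 1) * Rabs (r n))%R. nra.
  apply Rmult_lt_compat_l with (r := (Rabs c + 1)%R) in HN; [|lra].
  replace ((Rabs c + 1) * (eps / (Rabs c + 1)))%R with eps in HN by (field; lra). lra.
Qed.

Lemma Cseries_Ccv f l : Cseries_cv f l <-> Ccv (Csum f) l.
Proof. split; intro H; exact H. Qed.

Lemma Cseries_ext f g l : (forall n, f n = g n) -> Cseries_cv f l -> Cseries_cv g l.
Proof. intros E H. apply Cseries_Ccv. apply Cseries_Ccv in H. eapply Ccv_ext; [|exact H].
  intros. apply Csum_ext. auto. Qed.

Lemma Cseries_lin c d f g l m : Cseries_cv f l -> Cseries_cv g m ->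
  Cseries_cv (fun n => c * f n + d * g n) (c * l + d * m).
Proof. intros H1 H2. apply Cseries_Ccv. apply Cseries_Ccv in H1, H2.
  eapply Ccv_ext; [|apply Ccv_add; apply Ccv_scal; [exact H1| exact H2]].
  intros n. simpl. rewrite Csum_add, !Csum_scal. reflexivity. Qed.

Lemma Cseries_shift f l : Cseries_cv f l -> Cseries_cv (fun k => f (S k)) (l - f O).
Proof. intros H. apply Cseries_Ccv. apply Cseries_Ccv, Ccv_shift in H.
  eapply Ccv_ext; [|apply (Ccv_sub _ _ _ _ H (Ccv_const (f O)))].
  intros n. cbv beta. rewrite (Csum_shift f n). ring. Qed.

Open Scope R_scope.
Local Open Scope C_scope.

Lemma exp_le' x y : (x <= y)%R -> (exp x <= exp y)%R.
Proof. intros H. destruct (Rle_lt_or_eq_dec _ _ H). left; apply exp_increasing; auto. subst; lra. Qed.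

Lemma pow_le1 r n : (0 <= r)%R -> (r <= 1)%R -> (r ^ n <= 1)%R.
Proof. intros H1 H2. induction n; simpl. lra. pose proof (pow_le r n H1). nra. Qed.

Lemma qpoch_upper (x p : Cx) : Cnorm p < 1 -> exists U, forall n, Cnorm (qpoch x p n) <= U.
Proof.
  intros Hp. set (r := Cnorm p) in *. set (X := Cnorm x) in *. pose proof (Cnorm_ge0 p). pose proof (Cnorm_ge0 x).
  fold r X in H, H0.
  assert (Hi : forall n, Cnorm (qpoch x p n) <= exp (X * (1 - r ^ n) / (1 - r))%R).
  { induction n; simpl.
    - rewrite Cnorm_one. replace (X * (1 - 1) / (1 - r))%R with 0%R by (field; lra). rewrite exp_0. lra.
    - rewrite Cnorm_mul. pose proof (Cnorm_1sub_le (x * p ^ n)). rewrite Cnorm_mul, Cnorm_pow in H1.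
      fold r X in H1. pose proof (Cnorm_ge0 (qpoch x p n)). pose proof (Cnorm_ge0 (Cone - x * p ^ n)).
      apply Rle_trans with (exp (X * (1 - r ^ n) / (1 - r)) * exp (X * r ^ n))%R.
      + apply Rmult_le_compat; auto. eapply Rle_trans; [exact H1|]. apply exp_ineq1_le.
      + rewrite <- exp_plus. apply exp_le'. right. field. lra. }
  exists (exp (X / (1 - r))). intros n. eapply Rle_trans; [apply Hi|]. apply exp_le'.
  unfold Rdiv. apply Rmult_le_compat_r. apply Rlt_le, Rinv_0_lt_compat; lra.
  pose proof (pow_le r n H). nra.
Qed.

Lemma finite_min (g : nat -> R) N : (forall k, (k < N)%nat -> 0 < g k) ->
  exists d, 0 < d /\ forall k, (k < N)%nat -> d <= g k.
Proof.
  induction N; intros H.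
  - exists 1%R. split. lra. intros; lia.
  - destruct IHN as [d [Hd Hk]]. intros; apply H; lia.
    exists (Rmin d (g N)). split. apply Rmin_pos; auto. intros k Hk'.
    destruct (Nat.eq_dec k N). subst. apply Rmin_r.
    eapply Rle_trans. apply Rmin_l. apply Hk. lia.
Qed.

Lemma qpoch_lower (x p : Cx) : Cnorm p < 1 -> (forall n, qpoch x p n <> Czero) ->
  exists d, 0 < d /\ forall n, d <= Cnorm (qpoch x p n).
Proof.
  intros Hp Hnz. set (r := Cnorm p) in *. set (X := Cnorm x) in *. pose proof (Cnorm_ge0 p). pose proof (Cnorm_ge0 x).
  fold r X in H, H0.
  destruct (pow_lt_1_zero r ltac:(rewrite Rabs_right; lra) ((1 - r) / (2 * (X + 1)))%R) as [N HN].
  { apply Rdiv_lt_0_compat; lra. }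
  specialize (HN N ltac:(lia)). rewrite Rabs_right in HN by (apply Rle_ge, pow_le; lra).
  assert (HXN : (X * r ^ N < (1 - r) / 2)%R).
  { apply Rmult_lt_compat_l with (r := (2 * (X + 1))%R) in HN; [|lra].
    replace (2 * (X + 1) * ((1 - r) / (2 * (X + 1))))%R with (1 - r)%R in HN by (field; lra).
    pose proof (pow_le r N H). nra. }
  set (c := Cnorm (qpoch x p N)).
  assert (Hc : 0 < c) by (apply Cnorm_pos; auto).
  assert (Hm : forall m, c * (1 - X * r ^ N * (1 - r ^ m) / (1 - r)) <= Cnorm (qpoch x p (N + m))).
  { induction m.
    - rewrite Nat.add_0_r. simpl. replace (1 - X * r ^ N * (1 - 1) / (1 - r))%R with 1%R by (field; lra). fold c. lra.
    - rewrite Nat.add_succ_r. simpl qpoch. rewrite Cnorm_mul.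
      pose proof (Cnorm_1sub (x * p ^ (N + m))). rewrite Cnorm_mul, Cnorm_pow in H1. fold r X in H1.
      rewrite pow_add in H1.
      assert (Hrm : 0 <= r ^ m <= 1) by (split; [apply pow_le; lra| apply pow_le1; lra]).
      assert (HrN : 0 <= r ^ N) by (apply pow_le; lra).
      set (Sm := (X * r ^ N * (1 - r ^ m) / (1 - r))%R) in *.
      assert (HS : 0 <= Sm <= (1/2)%R).
      { unfold Sm. split. apply Rmult_le_pos; [|apply Rlt_le, Rinv_0_lt_compat; lra]. apply Rmult_le_pos; [apply Rmult_le_pos; lra|lra].
        apply Rmult_le_reg_r with (1 - r)%R. lra. unfold Rdiv. rewrite Rmult_assoc, Rinv_l by lra. nra. }
      set (t := (X * (r ^ N * r ^ m))%R) in *.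
      assert (Ht : 0 <= t <= (1/2)%R).
      { assert (0 <= X * r ^ N)%R by (apply Rmult_le_pos; lra).
        assert (X * r ^ N * r ^ m <= X * r ^ N * 1)%R by (apply Rmult_le_compat_l; lra).
        unfold t. rewrite <- Rmult_assoc. split. apply Rmult_le_pos; lra. lra. }
      assert (E : (X * r ^ N * (1 - r ^ (Datatypes.S m)) / (1 - r))%R = (Sm + t)%R) by (unfold Sm, t; simpl; field; lra). rewrite E.
      set (Y := Cnorm (qpoch x p (N + m))) in *. set (Z := Cnorm (Cone - x * p ^ (N + m))) in *.
      apply Rle_trans with (c * (1 - Sm) * (1 - t))%R. assert (0 <= c * Sm * t)%R by (apply Rmult_le_pos; [apply Rmult_le_pos|]; lra). nra.
      apply Rmult_le_compat; nra. }
  destruct (finite_min (fun k => Cnorm (qpoch x p k)) N) as [d [Hd Hk]].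
  { intros; apply Cnorm_pos; auto. }
  exists (Rmin d (c / 2)). split. apply Rmin_pos; lra. intros n.
  destruct (Nat.lt_ge_cases n N). eapply Rle_trans. apply Rmin_l. apply Hk; auto.
  replace n with (N + (n - N))%nat by lia. eapply Rle_trans. apply Rmin_r.
  eapply Rle_trans; [|apply Hm].
  assert (0 <= r ^ (n - N) <= 1) by (split; [apply pow_le; lra| apply pow_le1; lra]).
  assert (X * r ^ N * (1 - r ^ (n - N)) / (1 - r) <= (1/2)%R)%R.
  { apply Rmult_le_reg_r with (1 - r)%R. lra. unfold Rdiv. rewrite Rmult_assoc, Rinv_l by lra.
    pose proof (pow_le r N H). nra. }
  nra.
Qed.

Open Scope R_scope.
Local Open Scope C_scope.

Lemma qS (x p : Cx) n : qpoch x p (S n) = qpoch x p n * (Cone - x * p ^ n).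
Proof. reflexivity. Qed.
Lemma CpS (x : Cx) n : x ^ (S n) = x * x ^ n.
Proof. reflexivity. Qed.
Lemma Cpow_sq (x : Cx) n : (x * x) ^ n = x ^ n * x ^ n.
Proof. apply Cpow_mulb. Qed.

Lemma qpoch_self_nz (p : Cx) n : Cnorm p < 1 -> qpoch p p n <> Czero.
Proof.
  intros Hp. induction n. simpl. apply Cone_nz. rewrite qS. apply Cmul_nz; auto.
  intro E. pose proof (Cnorm_1sub (p * p ^ n)). rewrite E, Cnorm_zero, Cnorm_mul, Cnorm_pow in H.
  pose proof (Cnorm_ge0 p). pose proof (pow_le1 (Cnorm p) n H0 ltac:(lra)).
  pose proof (pow_le (Cnorm p) n H0). nra.
Qed.

Ltac solve_nz1 := match goal with
  | |- ?a <> Czero => first [assumption | exact Cone_nz | (change a with Cone; exact Cone_nz) |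
      match goal with H : ?b <> Czero |- _ =>
        let E := fresh in intro E; apply H; transitivity a; [ring | exact E] end]
  end.
Ltac nz := repeat split; try change (R1, R0) with Cone; try change (R0, R0) with Czero; solve_nz1.

Definition c2 (q : Cx) n := qpoch (q * q) (q * q) n.
Definition Fj (q : Cx) j w k :=
  qpoch (q * q) (q * q) (j + k - 1) * (- w) ^ (j + k) / (qpoch q q k * qpoch w q (j + j + k)).
Definition tj (q : Cx) j w := qpoch (q * q) (q * q) (j - 1) * (- w) ^ j / qpoch (w * w) (q * q) j.
Definition g0 (q : Cx) w k :=
  qpoch (q * q) (q * q) k * (- w) ^ (S k) / (qpoch q q (S k) * qpoch w q (S k)).
Definition EE (q w : Cx) M :=
  qpoch (q * q) (q * q) M * (- w) ^ (S M) * (Cone - w * q ^ (S M))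
  / (qpoch q q M * (Cone + w) * qpoch w q (S (S M))).

Definition Dom (q w : Cx) := Cnorm w < 1 /\ (forall n, qpoch w q n <> Czero) /\
  (forall n, qpoch (w * w) (q * q) n <> Czero).

Lemma F1_partial q w M : Cnorm q < 1 -> Dom q w ->
  Csum (Fj q 1 w) M = tj q 1 w - EE q w M.
Proof.
  intros Hq [Hw [H1 H2]]. induction M as [|M IHM].
  - unfold tj, EE. simpl.
    assert (A : Cone - w * Cone <> Czero). { pose proof (H1 1%nat). simpl in H. intro E; apply H. rewrite E. ring. }
    assert (B : Cone - w * (q * Cone) <> Czero). { pose proof (H1 2%nat). simpl in H. intro E; apply H. rewrite E. ring. }
    assert (C : Cone - w * w * Cone <> Czero). { pose proof (H2 1%nat). simpl in H. intro E; apply H. rewrite E. ring. }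
    assert (D : Cone + w <> Czero). { intro E. apply C. replace (Cone - w * w * Cone) with ((Cone + w) * (Cone - w * Cone)) by ring. rewrite E. ring. }
    field; nz.
  - change (Csum (Fj q 1 w) (S M)) with (Csum (Fj q 1 w) M + Fj q 1 w M). rewrite IHM.
    unfold EE, Fj. replace (1 + M - 1)%nat with M by lia. replace (1 + M)%nat with (S M) by lia.
    replace (1 + 1 + M)%nat with (S (S M)) by lia.
    rewrite (qS (q * q) (q * q) M), (qS q q M), (qS w q (S (S M))).
    rewrite (CpS (- w) (S M)), !CpS, Cpow_sq.
    assert (A : qpoch q q M <> Czero) by (apply qpoch_self_nz; auto).
    assert (A2 : Cone - q * q ^ M <> Czero) by (intro E; apply (qpoch_self_nz q (S M) Hq); rewrite qS, E; ring).
    assert (B : qpoch w q (S (S M)) <> Czero) by auto.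
    assert (B2 : Cone - w * (q * (q * q ^ M)) <> Czero).
    { pose proof (H1 (S (S (S M)))). rewrite qS in H. intro E; apply H. rewrite !CpS. rewrite E. ring. }
    assert (C : Cone - w * w * Cone <> Czero). { pose proof (H2 1%nat). simpl in H. intro E; apply H. rewrite E. ring. }
    assert (D : Cone + w <> Czero). { intro E. apply C. replace (Cone - w * w * Cone) with ((Cone + w) * (Cone - w * Cone)) by ring. rewrite E. ring. }
    field; nz.
Qed.

Lemma qshift (w q : Cx) n : qpoch w q (S n) = (Cone - w) * qpoch (w * q) q n.
Proof. change (S n) with (1 + n)%nat. rewrite qpoch_add. simpl. f_equal. ring. f_equal. ring. Qed.

Lemma qshift' (w q : Cx) n : Cone - w <> Czero -> qpoch (w * q) q n = qpoch w q (S n) / (Cone - w).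
Proof. intros H. rewrite qshift. field. auto. Qed.

Lemma Dom_all q z : Cnorm q < 1 -> Dom q z -> forall m, Dom q (z * q ^ m).
Proof.
  intros Hq [Hz [H1 H2]] m. split; [|split].
  - rewrite Cnorm_mul, Cnorm_pow. pose proof (Cnorm_ge0 q). pose proof (Cnorm_ge0 z).
    pose proof (pow_le1 (Cnorm q) m H ltac:(lra)). pose proof (pow_le (Cnorm q) m H). nra.
  - intros n. apply (qpoch_nz_r z q m n). auto.
  - intros n. replace (z * q ^ m * (z * q ^ m)) with (z * z * (q * q) ^ m) by (rewrite Cpow_sq; ring).
    apply (qpoch_nz_r (z * z) (q * q) m n). auto.
Qed.

Lemma Cnorm_quot_le (a b : Cx) A d : b <> Czero -> Cnorm a <= A -> 0 < d -> d <= Cnorm b ->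
  Cnorm (a / b) <= A / d.
Proof.
  intros Hb Ha Hd Hdb. rewrite Cnorm_div by auto. pose proof (Cnorm_ge0 a).
  unfold Rdiv. apply Rmult_le_compat; auto. apply Rlt_le, Rinv_0_lt_compat. lra.
  apply Rinv_le_contravar; auto.
Qed.

Lemma EE_cv q w : Cnorm q < 1 -> Dom q w -> Ccv (EE q w) Czero.
Proof.
  intros Hq Hd. pose proof Hd as [Hw [H1 H2]].
  assert (Hqq : Cnorm (q * q) < 1) by (rewrite Cnorm_mul; pose proof (Cnorm_ge0 q); nra).
  destruct (qpoch_upper (q * q) (q * q) Hqq) as [U1 HU1].
  destruct (qpoch_lower q q Hq (fun n => qpoch_self_nz q n Hq)) as [d1 [Hd1 HL1]].
  destruct (qpoch_lower w q Hq H1) as [d2 [Hd2 HL2]].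
  assert (Hw1 : Cone + w <> Czero).
  { intro E. apply (H2 1%nat). simpl. replace (Cone - w * w * Cone) with ((Cone + w) * (Cone - w)) by ring. rewrite E. ring. }
  pose proof (Cnorm_pos _ Hw1).
  pose proof (Cnorm_ge0 w) as Hw0. pose proof (Cnorm_ge0 q) as Hq0.
  apply Ccv_squeeze with (r := fun M => ((U1 * 2 / (d1 * Cnorm (Cone + w)%C * d2)) * Cnorm w ^ (S M))%R).
  - intros M. unfold EE. eapply Rle_trans. apply Cnorm_quot_le with (A := (U1 * Cnorm w ^ S M * 2)%R) (d := (d1 * Cnorm (Cone + w)%C * d2)%R).
    + apply Cmul_nz. apply Cmul_nz; auto. apply qpoch_self_nz; auto. auto.
    + rewrite !Cnorm_mul, Cnorm_pow, Cnorm_opp. pose proof (HU1 M).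
      pose proof (Cnorm_1sub_le (w * q ^ S M)) as H5. rewrite Cnorm_mul, Cnorm_pow in H5.
      pose proof (pow_le1 (Cnorm q) (S M) Hq0 ltac:(lra)). pose proof (pow_le (Cnorm q) (S M) Hq0).
      pose proof (pow_le (Cnorm w) (S M) Hw0). pose proof (Cnorm_ge0 (qpoch (q * q) (q * q) M)).
      pose proof (Cnorm_ge0 (Cone - w * q ^ S M)).
      apply Rmult_le_compat. apply Rmult_le_pos; auto. auto. apply Rmult_le_compat; auto; lra. nra.
    + apply Rmult_lt_0_compat; [apply Rmult_lt_0_compat|]; auto.
    + rewrite !Cnorm_mul. pose proof (HL1 M). pose proof (HL2 (S (S M))).
      apply Rmult_le_compat; try lra. apply Rmult_le_pos; lra. apply Rmult_le_compat; lra.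
    + right. field. repeat split; lra.
  - apply Un_cv_scal. intros eps He. destruct (Un_cv_geom (Cnorm w) Hw0 Hw eps He) as [N HN].
    exists N. intros n Hn. unfold R_dist in *. rewrite Rminus_0_r in *. simpl.
    specialize (HN n Hn). rewrite Rminus_0_r in HN. rewrite Rabs_right in * by (try apply Rle_ge; try apply Rmult_le_pos; try apply pow_le; lra).
    pose proof (pow_le (Cnorm w) n Hw0). nra.
Qed.

Lemma F1_cv q w : Cnorm q < 1 -> Dom q w -> Cseries_cv (Fj q 1 w) (tj q 1 w).
Proof.
  intros Hq Hd. apply Cseries_Ccv.
  pose proof (Ccv_sub _ _ _ _ (Ccv_const (tj q 1 w)) (EE_cv q w Hq Hd)) as H.
  replace (tj q 1 w - Czero) with (tj q 1 w) in H by ring.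
  eapply Ccv_ext; [|exact H]. intros n. cbv beta. rewrite F1_partial; auto.
Qed.

Open Scope R_scope.
Local Open Scope C_scope.

Definition nu (q : Cx) j w := (Cone - w * (q ^ j * q ^ j)) / (Cone - w).

Lemma qfac_nz (x p : Cx) n : qpoch x p (S n) <> Czero -> Cone - x * p ^ n <> Czero.
Proof. rewrite qS. intros H E. apply H. rewrite E. ring. Qed.

Lemma Cpow_oppmul (w q : Cx) n : (- (w * q)) ^ n = (- w) ^ n * q ^ n.
Proof. replace (- (w * q)) with ((- w) * q) by ring. apply Cpow_mulb. Qed.

Lemma Rj0 q w i : q <> Czero -> (forall n, qpoch w q n <> Czero) ->
  q ^ (S i) * Fj q (S i) w 0 - nu q (S i) w * Fj q (S i) (w * q) 0 = Czero.
Proof.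
  intros Hq H1. unfold Fj, nu. rewrite !Nat.add_0_r. replace (S i - 1)%nat with i by lia.
  assert (A : Cone - w <> Czero) by (pose proof (qfac_nz _ _ _ (H1 1%nat)); intro E; apply H; simpl; rewrite <- E; ring).
  rewrite (qshift' w q) by auto. rewrite (qS w q (S i + S i)), Cpow_add, Cpow_oppmul.
  assert (B := qfac_nz _ _ _ (H1 (S (S i + S i)))). rewrite Cpow_add in B.
  assert (C := H1 (S i + S i)%nat). assert (D := Cpow_nz q (S i) Hq).
  field. nz.
Qed.

Lemma Rjk q w i k : q <> Czero -> Cnorm q < 1 -> (forall n, qpoch w q n <> Czero) ->
  q ^ (S i) * Fj q (S i) w (S k) - nu q (S i) w * Fj q (S i) (w * q) (S k)
  = q ^ (S i) * Fj q (S (S i)) w k.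
Proof.
  intros Hq Hq1 H1. unfold Fj, nu.
  replace (S i + S k - 1)%nat with (S i + k)%nat by lia.
  replace (S (S i) + k - 1)%nat with (S i + k)%nat by lia.
  replace (S i + S k)%nat with (S (S i + k)) by lia.
  replace (S (S i) + k)%nat with (S (S i + k)) by lia.
  replace (S i + S i + S k)%nat with (S (S i + S i + k)) by lia.
  replace (S (S i) + S (S i) + k)%nat with (S (S (S i + S i + k))) by lia.
  assert (A : Cone - w <> Czero) by (pose proof (qfac_nz _ _ _ (H1 1%nat)); intro E; apply H; simpl; rewrite <- E; ring).
  rewrite (qshift' w q) by auto.
  assert (B1 := qfac_nz _ _ _ (H1 (S (S (S i + S i + k))))).
  assert (B2 := qfac_nz _ _ _ (H1 (S (S i + S i + k)))).
  assert (C := H1 (S i + S i + k)%nat). assert (D := Cpow_nz q (S i) Hq).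
  assert (E1 := qpoch_self_nz q k Hq1). assert (E2 := qfac_nz _ _ _ (qpoch_self_nz q (S k) Hq1)).
  rewrite (qS w q (S (S i + S i + k))), (qS w q (S i + S i + k)), (qS q q k), Cpow_oppmul.
  rewrite !CpS in *. rewrite !Cpow_add in *. rewrite !CpS in *.
  field. nz.
Qed.

Lemma Rt q w i : q <> Czero -> Cnorm q < 1 -> (forall n, qpoch w q n <> Czero) ->
  (forall n, qpoch (w * w) (q * q) n <> Czero) ->
  q ^ (S i) * tj q (S i) w - nu q (S i) w * tj q (S i) (w * q)
  = q ^ (S i) * tj q (S (S i)) w.
Proof.
  intros Hq Hq1 H1 H2. unfold tj, nu. replace (S i - 1)%nat with i by lia. replace (S (S i) - 1)%nat with (S i) by lia.
  assert (A : Cone - w <> Czero) by (pose proof (qfac_nz _ _ _ (H1 1%nat)); intro E; apply H; simpl; rewrite <- E; ring).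
  assert (A2 : Cone - w * w <> Czero) by (pose proof (qfac_nz _ _ _ (H2 1%nat)); intro E; apply H; simpl; rewrite <- E; ring).
  replace (w * q * (w * q)) with (w * w * (q * q)) by ring.
  rewrite (qshift' (w * w) (q * q)) by auto.
  assert (B1 := qfac_nz _ _ _ (H2 (S (S i)))). assert (B2 := H2 (S i)).
  assert (D := Cpow_nz q (S i) Hq).
  rewrite (qS (w * w) (q * q) (S i)), (qS (q * q) (q * q) i), Cpow_oppmul.
  rewrite !Cpow_sq in *. rewrite !CpS in *.
  field. nz.
Qed.

Lemma Gj_cv q z : q <> Czero -> Cnorm q < 1 -> Dom q z ->
  forall i m, Cseries_cv (Fj q (S i) (z * q ^ m)) (tj q (S i) (z * q ^ m)).
Proof.
  intros Hq Hq1 Hz i. induction i as [|i IH]; intros m.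
  - apply F1_cv; auto. apply Dom_all; auto.
  - set (w := z * q ^ m).
    assert (Hw : Dom q w) by (apply Dom_all; auto). destruct Hw as [Hw0 [Hw1 Hw2]].
    assert (Ew : z * q ^ S m = w * q) by (unfold w; simpl; ring).
    pose proof (IH m) as Ha. pose proof (IH (S m)) as Hb. fold w in Ha. rewrite Ew in Hb.
    pose proof (Cseries_lin (q ^ S i) (- nu q (S i) w) _ _ _ _ Ha Hb) as Hc.
    apply Cseries_shift in Hc.
    assert (Hd : Cseries_cv (fun k => Cinv (q ^ S i) * (q ^ (S i) * Fj q (S (S i)) w k) + Czero * Czero)
                  (Cinv (q ^ S i) * (q ^ S i * tj q (S i) w + - nu q (S i) w * tj q (S i) (w * q)
                     - (q ^ S i * Fj q (S i) w 0 + - nu q (S i) w * Fj q (S i) (w * q) 0)) + Czero * Czero)).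
    { apply Cseries_lin; [|intros eps He; exists O; intros; rewrite Csum_zero; replace (Czero - Czero) with Czero by ring; rewrite Cnorm_zero; lra].
      eapply Cseries_ext; [|exact Hc]. intros k. cbv beta. rewrite <- Rjk; auto. ring. }
    assert (D := Cpow_nz q (S i) Hq).
    assert (E1 := Rj0 q w i Hq Hw1). assert (E2 := Rt q w i Hq Hq1 Hw1 Hw2).
    assert (E1' : q ^ S i * Fj q (S i) w 0 + - nu q (S i) w * Fj q (S i) (w * q) 0 = Czero) by (rewrite <- E1; ring).
    assert (E2' : q ^ S i * tj q (S i) w + - nu q (S i) w * tj q (S i) (w * q) = q ^ S i * tj q (S (S i)) w) by (rewrite <- E2; ring).
    rewrite E1', E2' in Hd.
    replace (Cinv (q ^ S i) * (q ^ S i * tj q (S (S i)) w - Czero) + Czero * Czero) with (tj q (S (S i)) w) in Hd by (field; exact D).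
    eapply Cseries_ext; [|exact Hd]. intros k. cbv beta. field. exact D.
Qed.

Open Scope R_scope.
Local Open Scope C_scope.

Lemma R0rel q w k : Cnorm q < 1 -> (forall n, qpoch w q n <> Czero) ->
  g0 q w k - g0 q (w * q) k = Fj q 1 w k.
Proof.
  intros Hq1 H1. unfold g0, Fj. replace (1 + k - 1)%nat with k by lia.
  replace (1 + k)%nat with (S k) by lia. replace (1 + 1 + k)%nat with (S (S k)) by lia.
  assert (A : Cone - w <> Czero) by (pose proof (qfac_nz _ _ _ (H1 1%nat)); intro E; apply H; simpl; rewrite <- E; ring).
  rewrite (qshift' w q) by auto. rewrite Cpow_oppmul.
  assert (B1 := qfac_nz _ _ _ (H1 (S (S k)))). assert (C := H1 (S k)).
  assert (E1 := qpoch_self_nz q k Hq1). assert (E2 := qfac_nz _ _ _ (qpoch_self_nz q (S k) Hq1)).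
  rewrite (qS w q (S k)), (qS q q k). rewrite !CpS in *.
  field. nz.
Qed.

Lemma g0_bound q z : Cnorm q < 1 -> Dom q z ->
  exists B, 0 <= B /\ forall m K, Cnorm (Csum (g0 q (z * q ^ m)) K) <= B * Cnorm q ^ m.
Proof.
  intros Hq Hz. pose proof Hz as [Hz0 [Hz1 Hz2]].
  assert (Hqq : Cnorm (q * q) < 1) by (rewrite Cnorm_mul; pose proof (Cnorm_ge0 q); nra).
  destruct (qpoch_upper (q * q) (q * q) Hqq) as [U1 HU1].
  destruct (qpoch_upper z q Hq) as [Uz HUz].
  destruct (qpoch_lower q q Hq (fun n => qpoch_self_nz q n Hq)) as [d1 [Hd1 HL1]].
  destruct (qpoch_lower z q Hq Hz1) as [dz [Hdz HLz]].
  pose proof (Cnorm_ge0 z) as Hz00. pose proof (Cnorm_ge0 q) as Hq0.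
  assert (HU1p : 0 <= U1) by (eapply Rle_trans; [apply Cnorm_ge0| apply (HU1 O)]).
  assert (HUzp : 0 < Uz) by (eapply Rlt_le_trans; [apply (Cnorm_pos _ (Hz1 O))| apply (HUz O)]).
  set (C := (U1 * Uz / (d1 * dz))%R).
  assert (HC : 0 <= C) by (unfold C; apply Rmult_le_pos; [apply Rmult_le_pos; lra| apply Rlt_le, Rinv_0_lt_compat, Rmult_lt_0_compat; lra]).
  exists (C * Cnorm z * / (1 - Cnorm z))%R. split.
  { apply Rmult_le_pos. apply Rmult_le_pos; auto. apply Rlt_le, Rinv_0_lt_compat; lra. }
  intros m K. eapply Rle_trans. apply Csum_norm.
  set (w := z * q ^ m).
  assert (Hw : Cnorm w = (Cnorm z * Cnorm q ^ m)%R) by (unfold w; rewrite Cnorm_mul, Cnorm_pow; auto).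
  assert (Hqm : 0 <= Cnorm q ^ m <= 1) by (split; [apply pow_le; lra| apply pow_le1; lra]).
  assert (Hwz : Cnorm w <= Cnorm z) by (rewrite Hw; nra).
  assert (Hw0 : 0 <= Cnorm w) by apply Cnorm_ge0.
  apply Rle_trans with (Rsum (fun k => C * Cnorm w * Cnorm z ^ k) K)%R.
  - apply Rsum_le. intros k _. unfold g0.
    assert (Hden : forall n, (dz / Uz <= Cnorm (qpoch w q n))%R).
    { intros n. pose proof (qpoch_add z q m n) as E. fold w in E.
      pose proof (HLz (m + n)%nat). pose proof (HUz m). rewrite E, Cnorm_mul in H.
      pose proof (Cnorm_ge0 (qpoch w q n)). pose proof (Cnorm_pos _ (Hz1 m)).
      apply Rmult_le_reg_l with Uz. lra. unfold Rdiv. rewrite <- Rmult_assoc, (Rmult_comm Uz dz), Rmult_assoc, Rinv_r, Rmult_1_r by lra.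
      nra. }
    assert (Hwnz : forall n, qpoch w q n <> Czero) by (intros n; apply (qpoch_nz_r z q m n); auto).
    eapply Rle_trans. apply Cnorm_quot_le with (A := (U1 * Cnorm w ^ S k)%R) (d := (d1 * (dz / Uz))%R).
    + apply Cmul_nz; auto. apply qpoch_self_nz; auto.
    + rewrite Cnorm_mul, Cnorm_pow, Cnorm_opp. apply Rmult_le_compat; auto. apply Cnorm_ge0. apply pow_le, Cnorm_ge0. lra.
    + apply Rmult_lt_0_compat; auto. apply Rdiv_lt_0_compat; lra.
    + rewrite Cnorm_mul. apply Rmult_le_compat; auto. lra. apply Rlt_le, Rdiv_lt_0_compat; lra.
    + change (Cnorm w ^ S k)%R with (Cnorm w * Cnorm w ^ k)%R.
      pose proof (pow_le (Cnorm w) k Hw0). pose proof (pow_incr (Cnorm w) (Cnorm z) k ltac:(lra)).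
      replace (U1 * (Cnorm w * Cnorm w ^ k) / (d1 * (dz / Uz)))%R with (C * Cnorm w * Cnorm w ^ k)%R by (unfold C; field; lra).
      apply Rmult_le_compat_l. apply Rmult_le_pos; auto. auto.
  - rewrite (Rsum_scal (C * Cnorm w)%R (fun k => Cnorm z ^ k)%R).
    apply Rle_trans with (C * Cnorm w * / (1 - Cnorm z))%R.
    apply Rmult_le_compat_l. apply Rmult_le_pos; auto. apply Rsum_geom_le; lra.
    rewrite Hw. right. field. lra.
Qed.

Lemma lambert q z L : Cnorm q < 1 -> Dom q z -> Cseries_cv (g0 q z) L ->
  Cseries_cv (fun m => tj q 1 (z * q ^ m)) L.
Proof.
  intros Hq Hz HL.
  assert (Hm : forall m, Cseries_cv (g0 q (z * q ^ m)) (L - Csum (fun i => tj q 1 (z * q ^ i)) m)).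
  { induction m as [|m IH].
    - replace (z * q ^ 0) with z by (simpl; ring). simpl. replace (L - Czero) with L by ring. exact HL.
    - set (w := z * q ^ m) in *.
      assert (Hw : Dom q w) by (apply Dom_all; auto). pose proof Hw as [Hw0 [Hw1 Hw2]].
      replace (z * q ^ S m) with (w * q) by (unfold w; simpl; ring).
      pose proof (Cseries_lin Cone (- Cone) _ _ _ _ IH (F1_cv q w Hq Hw)) as Hc.
      eapply Cseries_ext; [|replace (L - Csum (fun i => tj q 1 (z * q ^ i)) (S m)) with
           (Cone * (L - Csum (fun i => tj q 1 (z * q ^ i)) m) + - Cone * tj q 1 w) by (simpl; unfold w; ring); exact Hc].
      intros k. cbv beta. rewrite <- (R0rel q w k Hq Hw1). ring. }
  destruct (g0_bound q z Hq Hz) as [B [HB HBb]].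
  assert (Hv : Ccv (fun m => L - Csum (fun i => tj q 1 (z * q ^ i)) m) Czero).
  { apply Ccv_squeeze with (r := fun m => (B * Cnorm q ^ m)%R).
    - intros m. apply (Ccv_bound _ _ _ (Hm m)). intros K. apply HBb.
    - apply Un_cv_scal. apply Un_cv_geom; auto. apply Cnorm_ge0. }
  apply Cseries_Ccv. pose proof (Ccv_sub _ _ _ _ (Ccv_const L) Hv) as H.
  replace (L - Czero) with L in H by ring. eapply Ccv_ext; [|exact H]. intros n. cbv beta. ring.
Qed.

Open Scope R_scope.
Local Open Scope C_scope.

Lemma Csum_split f K M : Csum f (K + M) = Csum f K + Csum (fun k => f (K + k)%nat) M.
Proof. induction M. rewrite Nat.add_0_r. simpl. ring. rewrite Nat.add_succ_r. simpl. rewrite IHM. ring. Qed.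

Lemma Ccv_shiftK u l K : Ccv u l -> Ccv (fun M => u (K + M)%nat) l.
Proof. intros H eps He. destruct (H eps He) as [N HN]. exists N. intros. apply HN. lia. Qed.

Lemma tail_bound f l A r : Cseries_cv f l -> 0 <= A -> 0 <= r -> r < 1 ->
  (forall k, Cnorm (f k) <= A * r ^ k) -> forall K, Cnorm (l - Csum f K) <= A * r ^ K / (1 - r).
Proof.
  intros H HA Hr0 Hr1 Hb K. apply Cseries_Ccv in H.
  pose proof (Ccv_sub _ _ _ _ (Ccv_shiftK _ _ K H) (Ccv_const (Csum f K))) as H2.
  apply (Ccv_bound _ _ _ H2). intros M. cbv beta. rewrite Csum_split.
  replace (Csum f K + Csum (fun k => f (K + k)%nat) M - Csum f K) with (Csum (fun k => f (K + k)%nat) M) by ring.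
  eapply Rle_trans. apply Csum_norm.
  apply Rle_trans with (Rsum (fun k => (A * r ^ K) * r ^ k) M)%R.
  apply Rsum_le. intros k _. rewrite Rmult_assoc, <- pow_add. apply Hb.
  rewrite Rsum_scal. unfold Rdiv. apply Rmult_le_compat_l.
  apply Rmult_le_pos; auto. apply pow_le; auto. apply Rsum_geom_le; auto.
Qed.

Local Close Scope C_scope.

Lemma Rsum_nat_split (a : nat -> R) M N : (M <= N)%nat ->
  Rsum (fun i => if le_lt_dec M i then a i else 0%R) N = (Rsum a N - Rsum a M)%R.
Proof.
  intros H. replace N with (M + (N - M))%nat by lia. generalize (N - M)%nat as d. intro d.
  induction d.
  - rewrite Nat.add_0_r. assert (forall n, (n <= M)%nat -> Rsum (fun i => if le_lt_dec M i then a i else 0%R) n = 0%R).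
    { induction n; intros Hn; simpl. reflexivity. rewrite IHn by lia. destruct (le_lt_dec M n). lia. lra. }
    rewrite H0 by lia. lra.
  - rewrite Nat.add_succ_r. simpl. rewrite IHd. destruct (le_lt_dec M (M + d)). lra. lia.
Qed.

Lemma mono_cv_le (Sq : nat -> R) L : (forall n, Sq n <= Sq (S n)) -> Un_cv Sq L -> forall n, Sq n <= L.
Proof.
  intros Hm H n. apply Rnot_lt_le. intro Hlt.
  assert (forall k, Sq n <= Sq (n + k)%nat). { induction k. rewrite Nat.add_0_r; lra. rewrite Nat.add_succ_r. pose proof (Hm (n + k)%nat). lra. }
  destruct (H (Sq n - L)%R ltac:(lra)) as [N HN]. specialize (HN (n + N)%nat ltac:(lia)).
  unfold R_dist in HN. specialize (H0 N). rewrite Rabs_right in HN by lra. lra.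
Qed.

Lemma conv_geom (a : nat -> R) A0 r : (forall i, 0 <= a i) -> Un_cv (fun n => Rsum a n) A0 ->
  0 <= r -> r < 1 -> Un_cv (fun N => Rsum (fun i => a i * r ^ (N - i)) N)%R 0.
Proof.
  intros Ha HA Hr0 Hr1 eps He.
  assert (Hmono : forall n, Rsum a n <= Rsum a (S n)) by (intros; simpl; pose proof (Ha n); lra).
  pose proof (mono_cv_le _ _ Hmono HA) as Hle.
  assert (HA0 : 0 <= A0) by (pose proof (Hle O); simpl in H; lra).
  destruct (HA (eps / 2)%R ltac:(lra)) as [M HM].
  destruct (pow_lt_1_zero r ltac:(rewrite Rabs_right; lra) (eps / 2 / (A0 + 1))%R) as [P HP].
  { apply Rdiv_lt_0_compat; lra. }
  exists (M + P)%nat. intros N HN. unfold R_dist. rewrite Rminus_0_r.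
  assert (Hnn : 0 <= Rsum (fun i => a i * r ^ (N - i)) N).
  { apply Rsum_nonneg. intros. apply Rmult_le_pos; auto. apply pow_le; auto. }
  rewrite Rabs_right by lra.
  apply Rle_lt_trans with (Rsum (fun i => a i * r ^ (N - M) + (if le_lt_dec M i then a i else 0))%R N).
  { apply Rsum_le. intros i Hi. pose proof (Ha i). destruct (le_lt_dec M i).
    - pose proof (pow_le r (N - M) Hr0). pose proof (pow_le1 r (N - i) Hr0 ltac:(lra)). nra.
    - assert (r ^ (N - i) <= r ^ (N - M)).
      { replace (N - i)%nat with ((N - M) + (M - i))%nat by lia. rewrite pow_add.
        pose proof (pow_le1 r (M - i) Hr0 ltac:(lra)). pose proof (pow_le r (N - M) Hr0). pose proof (pow_le r (M - i) Hr0). nra. }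
      nra. }
  assert (Hsum : forall (f g : nat -> R) n, Rsum (fun i => f i + g i)%R n = (Rsum f n + Rsum g n)%R).
  { induction n; simpl. lra. rewrite IHn. lra. }
  rewrite Hsum. rewrite Rsum_nat_split by lia.
  assert (Hs1 : Rsum (fun i => a i * r ^ (N - M))%R N = (Rsum a N * r ^ (N - M))%R).
  { generalize (r ^ (N - M))%R as c. intro c. clear. induction N; simpl. lra. rewrite IHN. lra. }
  rewrite Hs1.
  specialize (HP (N - M)%nat ltac:(lia)). rewrite Rabs_right in HP by (apply Rle_ge, pow_le; auto).
  specialize (HM M ltac:(lia)). unfold R_dist in HM. pose proof (Hle M). pose proof (Hle N).
  rewrite Rabs_left1 in HM by lra.
  assert (Rsum a N * r ^ (N - M) <= A0 * r ^ (N - M))%R by (apply Rmult_le_compat_r; [apply pow_le|]; auto).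
  assert (A0 * r ^ (N - M) <= (A0 + 1) * (eps / 2 / (A0 + 1)))%R.
  { apply Rmult_le_compat; try lra. apply pow_le; auto. }
  replace ((A0 + 1) * (eps / 2 / (A0 + 1)))%R with (eps / 2)%R in H2 by (field; lra).
  lra.
Qed.

Open Scope R_scope.
Local Open Scope C_scope.

Definition TbF (q a : Cx) (beta : nat -> Cx) m :=
  qpoch (q * q) (q * q) m * (- (q * a)) ^ (S m) * beta (S m).
Definition TaF (q a : Cx) (alpha : nat -> Cx) m :=
  qpoch (q * q) (q * q) m * (- (q * a)) ^ (S m) / qpoch (q * q * (a * a)) (q * q) (S m) * alpha (S m).

Lemma Tb_expand q a alpha beta N : Cnorm q < 1 -> Dom q (q * a) -> bailey_pair a q alpha beta ->
  TbF q a beta N = g0 q (q * a) N + Csum (fun i => alpha (S i) * Fj q (S i) (q * a) (N - i)) (S N).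
Proof.
  intros Hq [Hz0 [Hz1 Hz2]] [Ha0 [Hb0 Hb]]. unfold TbF. rewrite Hb by lia.
  rewrite Csum_shift. rewrite Nat.sub_0_r, Nat.add_0_r, Ha0.
  replace (a * q) with (q * a) by ring.
  assert (Hq1 : forall n, qpoch q q n <> Czero) by (intros; apply qpoch_self_nz; auto).
  set (z := q * a) in *. set (X := qpoch (q * q) (q * q) N * (- z) ^ S N).
  assert (Dist : forall x y w : Cx, x * (y + w) = x * y + x * w) by (intros; ring).
  rewrite Dist. f_equal.
  - unfold g0, X. assert (A1 := Hq1 (S N)). assert (A2 := Hz1 (S N)). field. nz.
  - rewrite <- Csum_scal. apply Csum_ext. intros i Hi. unfold Fj, X.
    replace (S i + (N - i) - 1)%nat with N by lia. replace (S i + (N - i))%nat with (S N) by lia.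
    replace (S i + S i + (N - i))%nat with (S N + S i)%nat by lia. replace (S N - S i)%nat with (N - i)%nat by lia.
    assert (A1 := Hq1 (N - i)%nat). assert (A2 := Hz1 (S N + S i)%nat). field. nz.
Qed.

Lemma fin_id q a alpha beta N : Cnorm q < 1 -> Dom q (q * a) -> bailey_pair a q alpha beta ->
  Csum (TbF q a beta) N = Csum (g0 q (q * a)) N
    + Csum (fun i => alpha (S i) * Csum (Fj q (S i) (q * a)) (N - i)) N.
Proof.
  intros Hq Hz Hb. induction N as [|N IH].
  - simpl. ring.
  - change (Csum (TbF q a beta) (S N)) with (Csum (TbF q a beta) N + TbF q a beta N).
    rewrite IH, (Tb_expand q a alpha beta N Hq Hz Hb).
    change (Csum (g0 q (q * a)) (S N)) with (Csum (g0 q (q * a)) N + g0 q (q * a) N).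
    change (Csum (fun i => alpha (S i) * Csum (Fj q (S i) (q * a)) (S N - i)) (S N)) with
      (Csum (fun i => alpha (S i) * Csum (Fj q (S i) (q * a)) (S N - i)) N
       + alpha (S N) * Csum (Fj q (S N) (q * a)) (S N - N)).
    change (Csum (fun i => alpha (S i) * Fj q (S i) (q * a) (N - i)) (S N)) with
      (Csum (fun i => alpha (S i) * Fj q (S i) (q * a) (N - i)) N + alpha (S N) * Fj q (S N) (q * a) (N - N)).
    replace (S N - N)%nat with 1%nat by lia. rewrite Nat.sub_diag.
    rewrite (Csum_ext (fun i => alpha (S i) * Csum (Fj q (S i) (q * a)) (S N - i))
               (fun i => alpha (S i) * Csum (Fj q (S i) (q * a)) (N - i) + alpha (S i) * Fj q (S i) (q * a) (N - i)) N).
    + rewrite Csum_add. simpl. ring.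
    + intros i Hi. replace (S N - i)%nat with (S (N - i)) by lia. simpl. ring.
Qed.


Lemma Ta_eq q a alpha i : TaF q a alpha i = alpha (S i) * tj q (S i) (q * a).
Proof. unfold TaF, tj. replace (S i - 1)%nat with i by lia.
  replace (q * a * (q * a)) with (q * q * (a * a)) by ring. ring. Qed.

Lemma rho_eq q a alpha i k : Cnorm q < 1 -> Dom q (q * a) ->
  alpha (S i) * Fj q (S i) (q * a) k = TaF q a alpha i *
   (qpoch (q * q) (q * q) (i + k) * qpoch (q * a * (q * a)) (q * q) (S i) * (- (q * a)) ^ k
    / (qpoch (q * q) (q * q) i * qpoch q q k * qpoch (q * a) q (S i + S i + k))).
Proof.
  intros Hq [Hz0 [Hz1 Hz2]]. rewrite Ta_eq. unfold Fj, tj.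
  replace (S i + k - 1)%nat with (i + k)%nat by lia. replace (S i - 1)%nat with i by lia.
  rewrite Cpow_add.
  assert (Hqq : Cnorm (q * q) < 1) by (rewrite Cnorm_mul; pose proof (Cnorm_ge0 q); nra).
  assert (A1 := qpoch_self_nz (q * q) i Hqq). assert (A2 := qpoch_self_nz q k Hq).
  assert (A3 := Hz1 (S i + S i + k)%nat). assert (A4 := Hz2 (S i)).
  field. nz.
Qed.

Lemma Cseries_scal c f l : Cseries_cv f l -> Cseries_cv (fun k => c * f k) (c * l).
Proof. intros H. apply Cseries_Ccv. apply Cseries_Ccv in H. eapply Ccv_ext; [|apply Ccv_scal; exact H].
  intros n. cbv beta. rewrite Csum_scal. reflexivity. Qed.

Lemma Un_cv_sumf f L : Un_cv (fun n => sum_f_R0 f n) L -> Un_cv (fun n => Rsum f n) L.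
Proof. intros H eps He. destruct (H eps He) as [N HN]. exists (S N). intros n Hn.
  destruct n. lia. rewrite <- Rsum_f_R0. apply HN. lia. Qed.

Lemma interchange q a alpha beta Lb La L2 : q <> Czero -> Cnorm q < 1 -> Dom q (q * a) ->
  bailey_pair a q alpha beta -> Cabs_summable (TaF q a alpha) ->
  Cseries_cv (TbF q a beta) Lb -> Cseries_cv (TaF q a alpha) La -> Cseries_cv (g0 q (q * a)) L2 ->
  Lb - La = L2.
Proof.
  intros Hq0 Hq Hz Hb Habs HLb HLa HL2.
  set (z := q * a) in *. pose proof Hz as [Hz0 [Hz1 Hz2]].
  set (D := fun N => Csum (fun i => alpha (S i) * (Csum (Fj q (S i) z) (N - i) - tj q (S i) z)) N).
  assert (Hid : forall N, Csum (TbF q a beta) N = Csum (g0 q z) N + Csum (TaF q a alpha) N + D N).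
  { intros N. rewrite fin_id with (alpha := alpha); auto. unfold D.
    rewrite (Csum_ext (TaF q a alpha) (fun i => alpha (S i) * tj q (S i) z)) by (intros; apply Ta_eq).
    assert (E : Csum (fun i => alpha (S i) * Csum (Fj q (S i) z) (N - i)) N =
      Csum (fun i => alpha (S i) * tj q (S i) z) N
      + Csum (fun i => alpha (S i) * (Csum (Fj q (S i) z) (N - i) - tj q (S i) z)) N).
    { rewrite <- Csum_add. apply Csum_ext. intros; ring. }
    fold z. rewrite E. ring. }
  assert (Hqq : Cnorm (q * q) < 1) by (rewrite Cnorm_mul; pose proof (Cnorm_ge0 q); nra).
  destruct (qpoch_upper (q * q) (q * q) Hqq) as [U1 HU1].
  destruct (qpoch_upper (z * z) (q * q) Hqq) as [Uzz HUzz].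
  destruct (qpoch_lower (q * q) (q * q) Hqq (fun n => qpoch_self_nz (q * q) n Hqq)) as [d2 [Hd2 HL2']].
  destruct (qpoch_lower q q Hq (fun n => qpoch_self_nz q n Hq)) as [d1 [Hd1 HL1]].
  destruct (qpoch_lower z q Hq Hz1) as [dz [Hdz HLz]].
  assert (HU1p : 0 <= U1) by (eapply Rle_trans; [apply Cnorm_ge0| apply (HU1 O)]).
  assert (HUzzp : 0 <= Uzz) by (eapply Rle_trans; [apply Cnorm_ge0| apply (HUzz O)]).
  pose proof (Cnorm_ge0 z) as Hzn.
  set (Cb := (U1 * Uzz / (d2 * d1 * dz))%R).
  assert (HCb : 0 <= Cb) by (unfold Cb; apply Rmult_le_pos; [apply Rmult_le_pos; lra| apply Rlt_le, Rinv_0_lt_compat; repeat apply Rmult_lt_0_compat; lra]).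
  assert (Hrho : forall i k, Cnorm (alpha (S i) * Fj q (S i) z k) <= Cnorm (TaF q a alpha i) * Cb * Cnorm z ^ k).
  { intros i k. unfold z. rewrite (rho_eq q a alpha i k Hq Hz). fold z. rewrite Cnorm_mul, Rmult_assoc.
    apply Rmult_le_compat_l. apply Cnorm_ge0.
    eapply Rle_trans. apply Cnorm_quot_le with (A := (U1 * Uzz * Cnorm z ^ k)%R) (d := (d2 * d1 * dz)%R).
    - apply Cmul_nz. apply Cmul_nz. apply qpoch_self_nz; auto. apply qpoch_self_nz; auto. auto.
    - rewrite !Cnorm_mul, Cnorm_pow, Cnorm_opp. apply Rmult_le_compat; auto.
      apply Rmult_le_pos; apply Cnorm_ge0. apply pow_le, Cnorm_ge0.
      apply Rmult_le_compat; auto; apply Cnorm_ge0. lra.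
    - repeat apply Rmult_lt_0_compat; lra.
    - rewrite !Cnorm_mul. apply Rmult_le_compat; try lra. apply Rmult_le_pos; lra.
      apply Rmult_le_compat; try lra. auto. auto. auto.
    - right. unfold Cb. field. repeat split; lra. }
  assert (HD : forall N, Cnorm (D N) <= ((Cb / (1 - Cnorm z)) * Rsum (fun i => Cnorm (TaF q a alpha i) * Cnorm z ^ (N - i)) N)%R).
  { intros N. unfold D. eapply Rle_trans. apply Csum_norm.
    rewrite <- Rsum_scal. apply Rsum_le. intros i Hi.
    assert (Hser : Cseries_cv (fun k => alpha (S i) * Fj q (S i) z k) (alpha (S i) * tj q (S i) z)).
    { apply Cseries_scal. pose proof (Gj_cv q z Hq0 Hq Hz i O) as G.
      replace (z * q ^ 0) with z in G by (simpl; ring). exact G. }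
    pose proof (tail_bound _ _ (Cnorm (TaF q a alpha i) * Cb)%R (Cnorm z) Hser
                  ltac:(apply Rmult_le_pos; auto; apply Cnorm_ge0) Hzn Hz0 (Hrho i) (N - i)%nat) as T.
    rewrite Csum_scal in T.
    replace (alpha (S i) * (Csum (Fj q (S i) z) (N - i) - tj q (S i) z))
      with (- (alpha (S i) * tj q (S i) z - alpha (S i) * Csum (Fj q (S i) z) (N - i))) by ring.
    rewrite Cnorm_opp. eapply Rle_trans. exact T. right. field. lra. }
  destruct Habs as [A0 HA0]. apply Un_cv_sumf in HA0.
  assert (HDc : Ccv D Czero).
  { apply Ccv_squeeze with (r := fun N => ((Cb / (1 - Cnorm z)) * Rsum (fun i => Cnorm (TaF q a alpha i) * Cnorm z ^ (N - i)) N)%R).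
    exact HD. apply Un_cv_scal. apply conv_geom with (A0 := A0); auto. intros; apply Cnorm_ge0. }
  apply Cseries_Ccv in HLb, HLa, HL2.
  pose proof (Ccv_add _ _ _ _ (Ccv_add _ _ _ _ HL2 HLa) HDc) as Hsum.
  assert (Lb = L2 + La + Czero).
  { apply (Ccv_unique (Csum (TbF q a beta))); auto. eapply Ccv_ext; [|exact Hsum]. intros; cbv beta. rewrite Hid. reflexivity. }
  rewrite H. ring.
Qed.

Open Scope R_scope.
Local Open Scope C_scope.

Fixpoint tri (n : nat) : nat := match n with O => O | S k => (tri k + k)%nat end.

Definition alpha_u (a q : Cx) n :=
  (Cone - a * q ^ (n + n)) * qpoch a q n * (- Cone) ^ n * q ^ (tri n) / ((Cone - a) * qpoch q q n).
Definition beta_u (n : nat) : Cx := match n with O => Cone | S _ => Czero end.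

Definition Pu (a q : Cx) m d :=
  (- Cone) ^ m * q ^ (tri (S m)) * qpoch (a * q) q m * (Cone - q ^ d)
  / (qpoch q q m * qpoch q q d * qpoch (a * q) q (m + d + m)).

Lemma unit_partial a q m : Cnorm q < 1 -> Cone - a <> Czero -> (forall n, qpoch (a * q) q n <> Czero) ->
  forall d, (Cone - q ^ (m + d)) * Csum (fun j => alpha_u a q j / (qpoch q q (m + d - j) * qpoch (a * q) q (m + d + j))) (S m)
   = Pu a q m d.
Proof.
  intros Hq Ha Haq. induction m as [|m IH]; intros d.
  - simpl Csum. unfold Pu, alpha_u. simpl tri. rewrite Nat.sub_0_r, !Nat.add_0_r. simpl plus.
    assert (A1 := qpoch_self_nz q d Hq). assert (A2 := Haq d). simpl. field. nz.
  - change (Csum (fun j => alpha_u a q j / (qpoch q q (S m + d - j) * qpoch (a * q) q (S m + d + j))) (S (S m)))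
      with (Csum (fun j => alpha_u a q j / (qpoch q q (S m + d - j) * qpoch (a * q) q (S m + d + j))) (S m)
            + alpha_u a q (S m) / (qpoch q q (S m + d - S m) * qpoch (a * q) q (S m + d + S m))).
    replace (S m + d)%nat with (m + S d)%nat by lia.
    assert (Dist : forall x y w : Cx, x * (y + w) = x * y + x * w) by (intros; ring).
    rewrite Dist, IH. clear IH.
    replace (m + S d - S m)%nat with d by lia.
    replace (m + S d + S m)%nat with (S (S (m + d + m))) by lia.
    unfold Pu, alpha_u. replace (m + S d + m)%nat with (S (m + d + m)) by lia.
    replace (S m + d + S m)%nat with (S (S (m + d + m))) by lia.
    change (tri (S (S m))) with (tri (S m) + S m)%nat.
    rewrite (qshift a q m). rewrite (qS (a * q) q (S (m + d + m))), (qS (a * q) q (m + d + m)), (qS q q d), (qS q q m).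
    assert (A1 := qpoch_self_nz q d Hq). assert (A2 := qpoch_self_nz q m Hq).
    assert (A3 := Haq (m + d + m)%nat).
    assert (A4 := qfac_nz _ _ _ (Haq (S (m + d + m)))). assert (A5 := qfac_nz _ _ _ (Haq (S (S (m + d + m))))).
    assert (A6 := qfac_nz _ _ _ (qpoch_self_nz q (S d) Hq)). assert (A7 := qfac_nz _ _ _ (qpoch_self_nz q (S m) Hq)).
    rewrite !Cpow_add in *. rewrite !CpS in *. rewrite !Cpow_add in *.
    rewrite (qS (a * q) q m). field_simplify_eq; [ring | nz].
Qed.

Lemma unit_bailey a q : Cnorm q < 1 -> Cone - a <> Czero -> (forall n, qpoch (a * q) q n <> Czero) ->
  bailey_pair a q (alpha_u a q) beta_u.
Proof.
  intros Hq Ha Haq. split; [|split].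
  - unfold alpha_u. simpl. field. nz.
  - reflexivity.
  - intros n Hn. destruct n. lia. change (beta_u (S n)) with Czero.
    pose proof (unit_partial a q (S n) Hq Ha Haq 0%nat) as H.
    rewrite Nat.add_0_r in H. unfold Pu in H. simpl (q ^ 0) in H.
    replace (Cone - Cone) with Czero in H by ring.
    assert (E : (Cone - q ^ S n) <> Czero) by exact (qfac_nz q q n (qpoch_self_nz q (S n) Hq)).
    symmetry. apply (f_equal (fun x => x / (Cone - q ^ S n))) in H.
    replace ((Cone - q ^ S n) * Csum (fun j => alpha_u a q j / (qpoch q q (S n - j) * qpoch (a * q) q (S n + j))) (S (S n)) / (Cone - q ^ S n))
      with (Csum (fun j => alpha_u a q j / (qpoch q q (S n - j) * qpoch (a * q) q (S n + j))) (S (S n))) in H by (field; exact E).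
    rewrite H. unfold Cdiv. ring.
Qed.

Lemma tri_eq n : (n * (n + 1) / 2)%nat = (tri n + n)%nat.
Proof.
  assert (H : (n * (n + 1) = 2 * (tri n + n))%nat).
  { induction n. reflexivity. simpl tri. nia. }
  rewrite H. rewrite Nat.mul_comm. apply Nat.div_mul. lia.
Qed.

Lemma c2_split q n : qpoch (q * q) (q * q) n = qpoch q q n * qpoch (- q) q n.
Proof. induction n. cbn [qpoch]. ring. rewrite !qS, IHn, Cpow_sq. ring. Qed.

Lemma s_ratio s q n : qpoch (q * s) q n * qpoch (- (q * s)) q n * (Cone - s * s)
  = (Cone - s * s * q ^ (n + n)) * qpoch s q n * qpoch (- s) q n.
Proof.
  induction n. simpl. ring.
  assert (E1 : forall x : Cx, qpoch x q (S n) = qpoch x q n * (Cone - x * q ^ n)) by (intros; apply qS).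
  assert (E2 : forall x : Cx, qpoch x q (S n) = (Cone - x) * qpoch (x * q) q n) by (intros; apply qshift).
  pose proof (E2 (q * s)) as F1. pose proof (E2 (- (q * s))) as F2.
  pose proof (E1 s) as G1. pose proof (E1 (- s)) as G2. pose proof (E2 s) as H1. pose proof (E2 (- s)) as H2.
  replace (q * s * q) with (q * (q * s)) in F1 by ring.
  rewrite (qS (q * s)), (qS (- (q * s))), (qS s), (qS (- s)).
  replace (S n + S n)%nat with (S (S (n + n))) by lia. rewrite !CpS.
  transitivity (qpoch (q * s) q n * qpoch (- (q * s)) q n * (Cone - s * s) * ((Cone - q * s * q ^ n) * (Cone - - (q * s) * q ^ n))).
  ring. rewrite IHn. rewrite Cpow_add. ring.
Qed.

Open Scope R_scope.
Local Open Scope C_scope.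

Lemma Cabs_summable_ext f g : (forall n, f n = g n) -> Cabs_summable f -> Cabs_summable g.
Proof. intros E [L HL]. exists L. intros eps He. destruct (HL eps He) as [N HN]. exists N. intros n Hn.
  rewrite <- (sum_eq (fun k => Cnorm (f k)) (fun k => Cnorm (g k)) n). auto.
  intros. rewrite E. reflexivity. Qed.

Lemma zero_series f L : (forall n, f n = Czero) -> Cseries_cv f L -> L = Czero.
Proof. intros E H. apply Cseries_Ccv in H. apply (Ccv_unique _ _ _ H).
  eapply Ccv_ext; [|apply (Ccv_const Czero)]. intros n. cbv beta. rewrite (Csum_ext f (fun _ => Czero)).
  symmetry. apply Csum_zero. intros; apply E. Qed.

Lemma mone_sq n : (- Cone) ^ n * (- Cone) ^ n = Cone.
Proof. induction n. cbn [Cpow]. ring. rewrite CpS. transitivity ((- Cone) ^ n * (- Cone) ^ n). ring. exact IHn. Qed.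

Lemma Cpow_opp (x : Cx) n : (- x) ^ n = (- Cone) ^ n * x ^ n.
Proof. replace (- x) with ((- Cone) * x) by ring. apply Cpow_mulb. Qed.

Lemma T2eq q a m : Cnorm q < 1 -> (forall n, qpoch (q * a) q n <> Czero) ->
  qpoch (- q) q m * (- (q * a)) ^ (S m) / (qpoch (q * a) q (S m) * (Cone - q ^ (S m)))
  = g0 q (q * a) m.
Proof.
  intros Hq H. unfold g0. rewrite c2_split, (qS q q m).
  assert (A1 := qpoch_self_nz q m Hq). assert (A2 := qfac_nz _ _ _ (qpoch_self_nz q (S m) Hq)).
  assert (A3 := H (S m)). rewrite !CpS. field. nz.
Qed.

Lemma T3eq q a m : Cnorm q < 1 -> Dom q (q * a) ->
  a * q ^ (S m) / (Cone - a * a * q ^ (2 * S m)) = - Cone * tj q 1 (q * a * q ^ m).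
Proof.
  intros Hq Hz. pose proof (Dom_all q (q * a) Hq Hz m) as [_ [_ H2]].
  assert (A := qfac_nz _ _ _ (H2 1%nat)). unfold tj. cbn [qpoch Cpow Nat.sub] in *.
  replace (2 * S m)%nat with (S m + S m)%nat by lia. rewrite Cpow_add. rewrite !CpS.
  assert (A' : Cone - a * a * (q * q ^ m * (q * q ^ m)) <> Czero).
  { intro E; apply A. rewrite <- E. ring. }
  field. nz.
Qed.

Lemma T1eq q s a m : s * s = a -> Cnorm q < 1 ->
  (forall n, qpoch s q n <> Czero) -> (forall n, qpoch (- s) q n <> Czero) ->
  (forall n, qpoch (q * q * (a * a)) (q * q) n <> Czero) ->
  qpoch (q * s) q (S m) * qpoch (- (q * s)) q (S m) * qpoch a q (S m)
      * qpoch (- q) q m * q ^ (S m * (S m + 1) / 2) * a ^ (S m)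
    / (qpoch s q (S m) * qpoch (- s) q (S m) * qpoch (q * q * (a * a)) (q * q) (S m)
       * (Cone - q ^ (S m)))
  = TaF q a (alpha_u a q) m.
Proof.
  intros Hs Hq H1 H2 H3. subst a.
  assert (B : Cone - s * s <> Czero).
  { pose proof (qfac_nz _ _ _ (H1 1%nat)) as B1. pose proof (qfac_nz _ _ _ (H2 1%nat)) as B2.
    cbn [Cpow] in B1, B2. replace (Cone - s * s) with ((Cone - s * Cone) * (Cone - - s * Cone)) by ring.
    apply Cmul_nz; auto. }
  assert (E : qpoch (q * s) q (S m) * qpoch (- (q * s)) q (S m)
     = (Cone - s * s * q ^ (S m + S m)) * qpoch s q (S m) * qpoch (- s) q (S m) / (Cone - s * s)).
  { pose proof (s_ratio s q (S m)) as R.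
    apply (f_equal (fun x => x / (Cone - s * s))) in R. cbv beta in R.
    replace (qpoch (q * s) q (S m) * qpoch (- (q * s)) q (S m) * (Cone - s * s) / (Cone - s * s))
      with (qpoch (q * s) q (S m) * qpoch (- (q * s)) q (S m)) in R by (field; exact B).
    rewrite R. reflexivity. }
  rewrite E. unfold TaF, alpha_u. rewrite tri_eq, (Cpow_add q (tri (S m)) (S m)).
  rewrite c2_split, (qS q q m). rewrite (Cpow_opp (q * (s * s))).
  assert (A1 := qpoch_self_nz q m Hq). assert (A2 := qfac_nz _ _ _ (qpoch_self_nz q (S m) Hq)).
  assert (A3 := H1 (S m)). assert (A4 := H2 (S m)). assert (A5 := H3 (S m)).
  pose proof (mone_sq (S m)) as M.
  set (u := (- Cone) ^ S m) in *. rewrite !CpS.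
  match goal with |- ?L = ?R => transitivity (L * (u * u)) end.
  rewrite M. ring.
  rewrite (Cpow_mulb q (s * s) m). field. nz.
Qed.

Lemma zero_series_cv : Cseries_cv (fun _ => Czero) Czero.
Proof. apply Cseries_Ccv. eapply Ccv_ext; [|apply (Ccv_const Czero)]. intros n. cbv beta. symmetry. apply Csum_zero. Qed.

(* All series are indexed by m >= 0 with n = S m >= 1. *)
Theorem corollary3p5 (a q s : Cx) (alpha beta : nat -> Cx) :
  Cnorm q < 1 -> Cnorm (q * a) < 1 ->
  s * s = a ->
  bailey_pair a q alpha beta ->
  (* no denominator vanishes *)
  (forall n : nat, qpoch q q n <> Czero) ->
  (forall n : nat, qpoch (a * q) q n <> Czero) ->
  (forall n : nat, qpoch (q * q * (a * a)) (q * q) n <> Czero) ->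
  (forall n : nat, qpoch s q n <> Czero) ->
  (forall n : nat, qpoch (- s) q n <> Czero) ->
  (forall n : nat, qpoch (q * a) q n <> Czero) ->
  (forall n : nat, (n > 0)%nat -> Cone - q ^ n <> Czero) ->
  (forall n : nat, (n > 0)%nat -> Cone - a * a * q ^ (2 * n) <> Czero) ->
  let Tb := fun m : nat =>
    qpoch (q * q) (q * q) m * (- (q * a)) ^ (S m) * beta (S m) in
  let Ta := fun m : nat =>
    qpoch (q * q) (q * q) m * (- (q * a)) ^ (S m)
      / qpoch (q * q * (a * a)) (q * q) (S m) * alpha (S m) in
  let T1 := fun m : nat =>
    qpoch (q * s) q (S m) * qpoch (- (q * s)) q (S m) * qpoch a q (S m)
      * qpoch (- q) q m * q ^ (S m * (S m + 1) / 2) * a ^ (S m)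
    / (qpoch s q (S m) * qpoch (- s) q (S m) * qpoch (q * q * (a * a)) (q * q) (S m)
       * (Cone - q ^ (S m))) in
  let T2 := fun m : nat =>
    qpoch (- q) q m * (- (q * a)) ^ (S m) / (qpoch (q * a) q (S m) * (Cone - q ^ (S m))) in
  let T3 := fun m : nat =>
    a * q ^ (S m) / (Cone - a * a * q ^ (2 * S m)) in
  (* all series converge absolutely *)
  Cabs_summable Tb -> Cabs_summable Ta -> Cabs_summable T1 ->
  Cabs_summable T2 -> Cabs_summable T3 ->
  forall Lb La L1 L2 L3 : Cx,
    Cseries_cv Tb Lb -> Cseries_cv Ta La -> Cseries_cv T1 L1 ->
    Cseries_cv T2 L2 -> Cseries_cv T3 L3 ->
    Lb - La = - L1 /\ Lb - La = L2 /\ Lb - La = - L3.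
Proof.
  intros Hq Hqa Hs Hb Hqq Haq Hq2 Hsn Hmsn Hqan Hq1n Haan Tb Ta T1 T2 T3 Htb Hta Ht1 Ht2 Ht3
    Lb La L1 L2 L3 HLb HLa HL1 HL2 HL3.
  destruct (classic (q = Czero)) as [Hq0|Hq0].
  - subst q.
    assert (E1 : Lb = Czero) by (apply (zero_series Tb); [intros m; unfold Tb; rewrite CpS; ring | exact HLb]).
    assert (E2 : La = Czero) by (apply (zero_series Ta); [intros m; unfold Ta; rewrite CpS; unfold Cdiv; ring | exact HLa]).
    assert (E3 : L1 = Czero).
    { apply (zero_series T1); [|exact HL1]. intros m; unfold T1. rewrite tri_eq, Cpow_add, (CpS Czero m). unfold Cdiv; ring. }
    assert (E4 : L2 = Czero) by (apply (zero_series T2); [intros m; unfold T2; rewrite CpS; unfold Cdiv; ring | exact HL2]).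
    assert (E5 : L3 = Czero) by (apply (zero_series T3); [intros m; unfold T3; rewrite (CpS Czero m); unfold Cdiv; ring | exact HL3]).
    rewrite E1, E2, E3, E4, E5. split; [|split]; ring.
  - assert (Hdom : Dom q (q * a)).
    { split; [exact Hqa|split; [exact Hqan|]]. intros n. replace (q * a * (q * a)) with (q * q * (a * a)) by ring. auto. }
    assert (HL2' : Cseries_cv (g0 q (q * a)) L2).
    { eapply Cseries_ext; [|exact HL2]. intros m. unfold T2. apply T2eq; auto. }
    assert (Main := interchange q a alpha beta Lb La L2 Hq0 Hq Hdom Hb Hta HLb HLa HL2').
    assert (Ha1 : Cone - a <> Czero).
    { rewrite <- Hs. pose proof (qfac_nz _ _ _ (Hsn 1%nat)) as B1. pose proof (qfac_nz _ _ _ (Hmsn 1%nat)) as B2.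
      cbn [Cpow] in B1, B2. replace (Cone - s * s) with ((Cone - s * Cone) * (Cone - - s * Cone)) by ring.
      apply Cmul_nz; auto. }
    assert (HT1 : forall m, T1 m = TaF q a (alpha_u a q) m) by (intros m; unfold T1; apply T1eq; auto).
    assert (U := interchange q a (alpha_u a q) beta_u Czero L1 L2 Hq0 Hq Hdom
                   (unit_bailey a q Hq Ha1 Haq) (Cabs_summable_ext _ _ HT1 Ht1)
                   ltac:(eapply Cseries_ext; [|exact zero_series_cv]; intros m; unfold TbF; simpl beta_u; ring)
                   ltac:(eapply Cseries_ext; [|exact HL1]; exact HT1) HL2').
    assert (Lm := lambert q (q * a) L2 Hq Hdom HL2').
    apply (Cseries_scal (- Cone)) in Lm.
    assert (HT3 : Cseries_cv T3 (- Cone * L2)).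
    { eapply Cseries_ext; [|exact Lm]. intros m. cbv beta. unfold T3. symmetry. apply T3eq; auto. }
    assert (E3 : L3 = - Cone * L2) by (apply (Ccv_unique (Csum T3)); auto).
    rewrite Main, E3. split; [|split]; [rewrite <- U| |]; ring.
Qed.
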